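(* Let $\Lambda$ be a countable index set, $\mathbb{Y}$ a Banach space, and $(\overline{a}_j)_{j\in\Lambda}$, $(\overline{r}_j)_{j\in\Lambda}$ sequences of positive reals with $\overline{a}_j\overline{r}_j^{-1}\to 0$. Write $\|x\|_{\omega,p}=(\sum_j\omega_j^p|x_j|^p)^{1/p}$, $\ell^p_\omega=\{x:\|x\|_{\omega,p}<\infty\}$. Suppose $D\subseteq\ell^2_{\overline{a}}$ is closed, $D\cap\ell^1_{\overline{r}}\neq\emptyset$, and $F\colon D\to\mathbb{Y}$ satisfies for some $L>0$: $\tfrac1L\|x^{(1)}-x^{(2)}\|_{\overline{a},2}\le\|F(x^{(1)})-F(x^{(2)})\|_{\mathbb{Y}}\le L\|x^{(1)}-x^{(2)}\|_{\overline{a},2}$ for all $x^{(1)},x^{(2)}\in D$. Let $\|x\|_{k_t}=\sup_{\alpha>0}\alpha\big(\sum_j\overline{a}_j^{-2}\overline{r}_j^2\mathbb{1}_{\{\overline{a}_j^{-2}\overline{r}_j\alpha<|x_j|\}}\big)^{1/t}$. Let $t\in(0,1)$, $\varrho>0$, $x^+\in D$ with $\|x^+\|_{k_t}\le\varrho$, $\delta\ge0$ and $g^{\mathrm{obs}}\in\mathbb{Y}$ with $\|g^{\mathrm{obs}}-F(x^+)\|_{\mathbb{Y}}\le\delta$. Let $\hat x_\alpha$ denote any minimizer of $\tfrac12\|g^{\mathrm{obs}}-F(x)\|_{\mathbb{Y}}^2+\alpha\sum_j\overline{r}_j|x_j|$ over $x\in D$. 1. (error splitting) For all $\alpha>0$: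 $\|x^+-\hat x_\alpha\|_{\overline{r},1}\le C_e(\delta^2\alpha^{-1}+\varrho^t\alpha^{1-t})$ and $\|x^+-\hat x_\alpha\|_{\overline{a},2}\le C_e(\delta+\varrho^{t/2}\alpha^{\frac{2-t}{2}})$, with $C_e$ depending only on $t$ and $L$. 2. (a-priori choice) If $\delta>0$ and $c_1\varrho^{\frac{t}{t-2}}\delta^{\frac{2}{2-t}}\le\alpha\le c_2\varrho^{\frac{t}{t-2}}\delta^{\frac{2}{2-t}}$ with $0<c_1<c_2$, then $\|x^+-\hat x_\alpha\|_{\overline{r},1}\le C_p\varrho^{\frac{t}{2-t}}\delta^{\frac{2-2t}{2-t}}$ and $\|x^+-\hat x_\alpha\|_{\overline{a},2}\le C_p\delta$, with $C_p$ depending only on $c_1,c_2,t,L$. 3. (discrepancy principle) Let $1\le\tau_1\le\tau_2$. If $\hat x_\alpha$ is a minimizer with $\tau_1\delta\le\|F(\hat x_\alpha)-g^{\mathrm{obs}}\|_{\mathbb{Y}}\le\tau_2\delta$, then $\|x^+-\hat x_\alpha\|_{\overline{r},1}\le C_d\varrho^{\frac{t}{2-t}}\delta^{\frac{2-2t}{2-t}}$ and $\|x^+-\hat x_\alpha\|_{\overline{a},2}\le C_d\delta$, with $C_d$ depending only on $\tau_2,t,L$.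
   Context: Convergence rates for weighted $\ell^1$ Tikhonov regularization (non-oversmoothing case, $t\in(0,1)$) on bounded sets of the weak sequence space $k_t$. *)

(* Defs.v *)
From HB Require Import structures.
From mathcomp Require Import all_boot all_order all_algebra.
From mathcomp Require Import all_classical all_reals all_analysis.
Set Implicit Arguments. Unset Strict Implicit. Unset Printing Implicit Defensive.
Import Order.TTheory GRing.Theory Num.Theory.
Import numFieldNormedType.Exports.
Local Open Scope classical_set_scope.
Local Open Scope ring_scope.

(* weighted p-norm  ||x||_{w,p} = (sum_j w_j^p |x_j|^p)^(1/p), valued in \bar R
   (it is +oo exactly when x is not in l^p_w). *)
Definition wnorm {R : realType} {Lam : countType} (w : Lam -> R) (p : R)
    (x : Lam -> R) : \bar R :=
  poweR (\esum_(j in [set: Lam]) ((w j `^ p) * (`|x j| `^ p))%:E) p^-1.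

Definition ktnorm {R : realType} {Lam : countType} (a r : Lam -> R) (t : R)
    (x : Lam -> R) : \bar R :=
  ereal_sup [set (alpha%:E * poweR (\esum_(j in [set: Lam])
                   ((a j)^-2 * (r j) ^+ 2
                    * (if (a j)^-2 * r j * alpha < `|x j| then 1 else 0))%:E) t^-1)%E
            | alpha in [set alpha : R | 0 < alpha]].

Definition closed_in_l2 {R : realType} {Lam : countType} (a : Lam -> R)
    (D : set (Lam -> R)) : Prop :=
  forall (u : nat -> Lam -> R) (x : Lam -> R),
    (forall n, D (u n)) -> (wnorm a 2 x < +oo)%E ->
    (wnorm a 2 (fun j => u n j - x j)) @[n --> \oo] --> 0%E ->
    D x.

Definition tikhonov {R : realType} {Lam : countType} {Y : normedModType R}
    (F : (Lam -> R) -> Y) (r : Lam -> R) (g : Y) (alpha : R) (x : Lam -> R)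
    : \bar R :=
  ((2^-1 * `|g - F x| ^+ 2)%:E + alpha%:E * wnorm r 1 x)%E.

Definition is_minimizer {R : realType} {Lam : countType} {Y : normedModType R}
    (F : (Lam -> R) -> Y) (D : set (Lam -> R)) (r : Lam -> R) (g : Y)
    (alpha : R) (xh : Lam -> R) : Prop :=
  D xh /\ forall x, D x -> (tikhonov F r g alpha xh <= tikhonov F r g alpha x)%E.

Definition setting {R : realType} {Lam : countType} {Y : completeNormedModType R}
    (a r : Lam -> R) (D : set (Lam -> R)) (F : (Lam -> R) -> Y) (L : R) : Prop :=
  [/\ (forall j, 0 < a j) /\ (forall j, 0 < r j),
      cvg_to (fmap (fun j => a j / r j) (@frechet_filter Lam)) (nbhs (0 : R)),
      (forall x, D x -> (wnorm a 2 x < +oo)%E) /\ closed_in_l2 a D,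
      (exists x, D x /\ (wnorm r 1 x < +oo)%E) &
      0 < L /\ forall x1 x2, D x1 -> D x2 ->
        ((L^-1)%:E * wnorm a 2 (fun j => (x1 j - x2 j)%R) <= (`|F x1 - F x2|%R)%:E)%E /\
        ((`|F x1 - F x2|%R)%:E <= L%:E * wnorm a 2 (fun j => (x1 j - x2 j)%R))%E].

(* Main.v *)
Require Import Defs.
From HB Require Import structures.
From mathcomp Require Import all_boot all_order all_algebra.
From mathcomp Require Import all_classical all_reals all_analysis.
From mathcomp Require Import ring lra.
Import Order.TTheory GRing.Theory Num.Theory.
Import numFieldNormedType.Exports.
Local Open Scope classical_set_scope.
Local Open Scope ring_scope.
Section Helpers.
Context {R : realType}.

Lemma esum_leR (T : choiceType) (h : T -> R) (B : \bar R) :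
  (forall s : seq T, uniq s -> ((\sum_(i <- s) h i)%:E <= B)%E) ->
  (\esum_(i in [set: T]) (h i)%:E <= B)%E.
Proof.
move=> H; apply: ge_ereal_sup => _ [X [finX _] <-].
rewrite fsbig_finite // sumEFin; apply: H; by [].
Qed.

Lemma esum_geR (T : choiceType) (h : T -> R) (s : seq T) :
  (forall i, 0 <= h i) -> uniq s ->
  ((\sum_(i <- s) h i)%:E <= \esum_(i in [set: T]) (h i)%:E)%E.
Proof.
move=> h0 us; apply: esum_ge; exists [set` s].
  by split => //; exact: finite_seq.
by rewrite -sumEFin (fsbig_seq _ _ us).
Qed.


Lemma wnorm1E (Lam : countType) (r x : Lam -> R) : (forall j, 0 <= r j) ->
  wnorm r 1 x = \esum_(j in [set: Lam]) (r j * `|x j|)%:E.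
Proof.
move=> r0; rewrite /wnorm invr1 poweRe1; last by apply: esum_ge0 => j _; rewrite lee_fin mulr_ge0 ?powR_ge0.
by apply: eq_esum => j _; rewrite !powRr1.
Qed.

Lemma wnorm2_bound (Lam : countType) (a x : Lam -> R) (M : R) :
  (forall j, 0 <= a j) -> (wnorm a 2 x <= M%:E)%E ->
  0 <= M /\ forall s : seq Lam, uniq s -> \sum_(j <- s) a j ^+ 2 * x j ^+ 2 <= M ^+ 2.
Proof.
move=> a0; rewrite /wnorm.
set E := esum _ _.
have E0 : (0 <= E)%E by apply: esum_ge0 => j _; rewrite lee_fin mulr_ge0 ?powR_ge0.
have Hs : forall s : seq Lam, uniq s ->
    ((\sum_(j <- s) a j ^+ 2 * x j ^+ 2)%:E <= E)%E.
  move=> s us; have := @esum_geR Lam (fun j => a j `^ 2 * `|x j| `^ 2) s (fun j => mulr_ge0 (powR_ge0 _ _) (powR_ge0 _ _)) us.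
  congr (_ <= _)%E; congr (_%:E); apply: eq_bigr => j _.
  by rewrite -[2]/(2%:R) !powR_mulrn // real_normK // num_real.
case: E E0 Hs => [e| |] // e0 Hs.
  rewrite poweR_EFin lee_fin => HM.
  have M0 : 0 <= M by apply: le_trans HM; exact: powR_ge0.
  split => // s us; have := Hs s us; rewrite lee_fin => /le_trans; apply.
  have -> : e = (e `^ 2^-1) ^+ 2.
    by rewrite -[2%N]/(2%N) -powR_mulrn ?powR_ge0 // -powRrM mulVf // powRr1.
  by rewrite expr2 expr2 ler_pM ?powR_ge0.
by rewrite poweRyr // invr_eq0.
Qed.

Lemma kt_bound (Lam : countType) (a r x : Lam -> R) (t rho beta : R) :
  0 < t -> 0 < beta -> (ktnorm a r t x <= rho%:E)%E ->
  forall s : seq Lam, uniq s ->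
  \sum_(j <- s) (a j)^-2 * r j ^+ 2 * (if (a j)^-2 * r j * beta < `|x j| then 1 else 0)
     <= (rho / beta) `^ t.
Proof.
move=> t0 b0 Hk s us.
have : (beta%:E * poweR (\esum_(j in [set: Lam])
                   ((a j)^-2 * (r j) ^+ 2
                    * (if (a j)^-2 * r j * beta < `|x j| then 1 else 0))%:E) t^-1 <= rho%:E)%E.
  by apply: le_trans Hk; apply: ereal_sup_ubound; exists beta.
have h0 : forall j, 0 <= (a j)^-2 * r j ^+ 2 * (if (a j)^-2 * r j * beta < `|x j| then 1 else 0).
  by move=> j; apply: mulr_ge0; [apply: mulr_ge0; [rewrite invr_ge0 sqr_ge0 | exact: sqr_ge0] | case: ifP].
have := @esum_geR Lam _ s h0 us.
set E := esum _ _.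
have E0 : (0 <= E)%E by apply: esum_ge0 => j _; rewrite lee_fin.
case: E E0 => [e| |] // e0.
  rewrite lee_fin => Hse; rewrite poweR_EFin -EFinM lee_fin => Hb.
  apply: (le_trans Hse).
  have -> : e = (e `^ t^-1) `^ t by rewrite -powRrM mulVf ?gt_eqF // powRr1.
  have rho0 : 0 <= rho := le_trans (mulr_ge0 (ltW b0) (powR_ge0 _ _)) Hb.
  apply: ge0_ler_powR; rewrite ?nnegrE ?powR_ge0 ?divr_ge0 ?(ltW t0) ?(ltW b0) //.
  by rewrite ler_pdivlMr // mulrC.
by move=> _; rewrite poweRyr ?invr_eq0 ?gt_eqF // gt0_muley // leye_eq.
Qed.


Lemma geo_cover (m v : R) (N : nat) : 0 < m -> v <= m -> m < v * 2 ^+ N ->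
  v <= \sum_(0 <= k < N) m / 2 ^+ k * (if m / 2 ^+ k.+1 < v then 1 else 0).
Proof.
move=> m0 vm; elim: N => [|N IH] H.
  by move: H; rewrite expr0 mulr1 => /(le_lt_trans vm); rewrite ltxx.
rewrite big_nat_recr //=.
have t0 : forall k : nat, 0 <= m / 2 ^+ k * (if m / 2 ^+ k.+1 < v then 1 else 0).
  by move=> k; rewrite mulr_ge0 ?divr_ge0 ?exprn_ge0 ?(ltW m0) //; case: ifP.
have [HN|HN] := leP (v * 2 ^+ N) m; last first.
  apply: le_trans (IH HN) _; rewrite lerDl mulr_ge0 ?divr_ge0 ?exprn_ge0 ?(ltW m0) //.
  by case: ifP.
have -> : m / 2 ^+ N.+1 < v by rewrite ltr_pdivrMr ?exprn_gt0.
rewrite mulr1; apply: (@le_trans _ _ (0 + m / 2 ^+ N)).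
  by rewrite add0r ler_pdivlMr ?exprn_gt0.
by apply: lerD => //; apply: sumr_ge0 => k _; exact: t0.
Qed.

Lemma exN (T : eqType) (s : seq T) (m v : T -> R) : (forall j, 0 <= m j) ->
  exists N : nat, forall j, j \in s -> 0 < v j -> m j < v j * 2 ^+ N.
Proof.
move=> m0; elim: s => [|j s [N1 IH]]; first by exists 0%N.
have h2 : (1 : R) < 2 by rewrite ltr1n.
have [vj0|vj0] := ltP 0 (v j); last first.
  exists N1 => i; rewrite inE => /orP[/eqP ->|/IH //]; by move=> /(le_lt_trans vj0); rewrite ltxx.
set n := Num.Def.archi_bound (m j / v j).
have Hn : m j < v j * 2 ^+ n.
  have := archi_boundP (divr_ge0 (m0 j) (ltW vj0)); rewrite -/n ltr_pdivrMr // => /lt_le_trans; apply; rewrite mulrC.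
  rewrite ler_pM2l // -natrX ler_nat; apply: ltnW; exact: ltn_expl.
exists (maxn N1 n) => i; rewrite inE => /orP[/eqP -> _|/IH Hi vi0].
  apply: lt_le_trans Hn _; rewrite ler_pM2l // (ler_eXn2l h2); exact: leq_maxr.
apply: lt_le_trans (Hi vi0) _; rewrite ler_pM2l // (ler_eXn2l h2); exact: leq_maxl.
Qed.

Lemma geo_sum (th : R) (N : nat) : 0 <= th < 1 ->
  \sum_(0 <= k < N) th ^+ k <= (1 - th)^-1.
Proof.
move=> /andP[th0 th1].
have E : (\sum_(0 <= k < N) th ^+ k) * (1 - th) = 1 - th ^+ N.
  elim: N => [|N IH]; first by rewrite big_nil mul0r expr0 subrr.
  by rewrite big_nat_recr //= mulrDl IH exprSr; ring.
rewrite -[X in _ <= X]mul1r ler_pdivlMr ?subr_gt0 // E.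
by rewrite lerBlDr lerDl exprn_ge0.
Qed.

Definition Kt (t : R) := 2 `^ t / (1 - 2 `^ t / 2).

Lemma two_powR_lt (t : R) : 0 < t < 1 -> 0 < 2 `^ t / 2 < 1.
Proof.
move=> /andP[t0 t1]; rewrite divr_gt0 ?powR_gt0 //= ltr_pdivrMr // mul1r.
have n2 : (2:R) != 0 by rewrite pnatr_eq0.
rewrite /powR (negbTE n2).
rewrite -[X in _ < X](@lnK _ 2) ?posrE //.
by rewrite ltr_expR -[X in _ < X]mul1r ltr_pM2r // ln_gt0 // ltr1n.
Qed.

Lemma Kt_gt0 (t : R) : 0 < t < 1 -> 0 < Kt t.
Proof.
move=> /two_powR_lt /andP[h0 h1]; rewrite /Kt divr_gt0 ?powR_gt0 ?subr_gt0 //.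
Qed.

Lemma dyadic (Lam : countType) (a r x : Lam -> R) (t rho beta : R) :
  0 < t < 1 -> 0 < beta -> 0 <= rho -> (forall j, 0 < a j) -> (forall j, 0 < r j) ->
  (ktnorm a r t x <= rho%:E)%E ->
  forall s : seq Lam, uniq s ->
  \sum_(j <- s) r j * `|x j| * (if (a j)^-2 * r j * beta < `|x j| then 0 else 1)
    <= Kt t * beta * (rho / beta) `^ t.
Proof.
move=> t01 b0 rho0 a0 r0 Hk s us.
have /andP[t0 t1] := t01.
have /andP[th0 th1] := two_powR_lt _ t01.
have m0 : forall j, 0 <= (a j)^-2 * r j * beta.
  by move=> j; rewrite !mulr_ge0 ?invr_ge0 ?sqr_ge0 ?(ltW (r0 j)) ?(ltW b0).
have [N HN] := @exN Lam s _ (fun j => `|x j|) m0.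
pose G j k := beta / 2 ^+ k * ((a j)^-2 * r j ^+ 2 *
   (if (a j)^-2 * r j * (beta / 2 ^+ k.+1) < `|x j| then 1 else 0)).
have G0 : forall j k, 0 <= G j k.
  move=> j k; rewrite /G; apply: mulr_ge0; first by rewrite divr_ge0 ?exprn_ge0 ?(ltW b0).
  by apply: mulr_ge0; [apply: mulr_ge0; [rewrite invr_ge0 sqr_ge0 | exact: sqr_ge0] | case: ifP].
have step1 : forall j, j \in s ->
    r j * `|x j| * (if (a j)^-2 * r j * beta < `|x j| then 0 else 1)
    <= \sum_(0 <= k < N) G j k.
  move=> j js; case: ifP => [_|/negbT]; first by rewrite mulr0; apply: sumr_ge0 => k _.
  rewrite -leNgt mulr1 => vm.
  have [v0|v0] := eqVneq (x j) 0.
    by rewrite v0 normr0 mulr0; apply: sumr_ge0 => k _.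
  have vp : 0 < `|x j| by rewrite normr_gt0.
  have mp : 0 < (a j)^-2 * r j * beta.
    apply: mulr_gt0 => //; apply: mulr_gt0 => //; by rewrite invr_gt0 exprn_gt0.
  have := geo_cover _ _ _ mp vm (HN j js vp).
  move=> /(ler_wpM2l (ltW (r0 j))); move/le_trans; apply.
  rewrite mulr_sumr; apply: ler_sum => k _; rewrite /G.
  have -> : (a j)^-2 * r j * (beta / 2 ^+ k.+1) = (a j)^-2 * r j * beta / 2 ^+ k.+1 by rewrite mulrA.
  by case: ifP => _; rewrite le_eqVlt; apply/orP; left; apply/eqP; ring.
set q := (rho / beta) `^ t; set P := 2 `^ t.
have q0 : 0 <= q by exact: powR_ge0.
have P0 : 0 <= P by exact: powR_ge0.
apply: (@le_trans _ _ (\sum_(j <- s) \sum_(0 <= k < N) G j k)).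
  rewrite big_seq [X in _ <= X]big_seq; apply: ler_sum => j js; exact: step1 j js.
rewrite exchange_big /=.
apply: (@le_trans _ _ (\sum_(0 <= k < N) beta / 2 ^+ k * (q * P ^+ k.+1))).
  apply: ler_sum => k _; rewrite /G -mulr_sumr; apply: ler_wpM2l.
    by rewrite divr_ge0 ?exprn_ge0 ?(ltW b0).
  have b' : 0 < beta / 2 ^+ k.+1 by rewrite divr_gt0 ?exprn_gt0.
  have := @kt_bound Lam a r x t rho (beta / 2 ^+ k.+1) t0 b' Hk s us.
  move=> /le_trans; apply.
  have -> : rho / (beta / 2 ^+ k.+1) = rho / beta * 2 ^+ k.+1.
    by rewrite invf_div; ring.
  rewrite powRM ?divr_ge0 ?exprn_ge0 ?(ltW b0) // -/q.
  rewrite -[(2:R) ^+ k.+1]powR_mulrn // powRAC powR_mulrn //.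
apply: (@le_trans _ _ (beta * q * P * \sum_(0 <= k < N) (P / 2) ^+ k)).
  rewrite mulr_sumr; apply: ler_sum => k _; rewrite expr_div_n exprS.
  by rewrite le_eqVlt; apply/orP; left; apply/eqP; ring.
apply: (@le_trans _ _ (beta * q * P * (1 - P / 2)^-1)).
  by apply: ler_wpM2l; [rewrite !mulr_ge0 ?(ltW b0) | apply: geo_sum; rewrite (ltW th0) th1].
by rewrite /Kt -/P le_eqVlt; apply/orP; left; apply/eqP; ring.
Qed.


Lemma point (aj rj xpj xhj beta c : R) : 0 < aj -> 0 < rj -> 0 < c ->
  rj * `|xpj - xhj| + rj * `|xpj| <= rj * `|xhj| +
   (c * (aj^-2 * rj ^+ 2 * (if aj^-2 * rj * beta < `|xpj| then 1 else 0))
    + aj ^+ 2 * (xpj - xhj) ^+ 2 / c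
    + 2 * (rj * `|xpj| * (if aj^-2 * rj * beta < `|xpj| then 0 else 1))).
Proof.
move=> a0 r0 c0.
set e := xpj - xhj.
have Y0 : 0 <= aj ^+ 2 * e ^+ 2 / c by apply: divr_ge0; [apply: mulr_ge0; exact: sqr_ge0 | exact: ltW].
have tri1 : `|xpj| <= `|xhj| + `|e|.
  by rewrite /e addrC; have := ler_normD (xpj - xhj) xhj; rewrite subrK.
have tri2 : `|e| <= `|xpj| + `|xhj| by rewrite /e; exact: ler_normB.
case: ifP => _.
  rewrite !mulr1 mulr0 ?addr0.
  have am : 2 * rj * `|e| <= c * (aj^-2 * rj ^+ 2) + aj ^+ 2 * e ^+ 2 / c.
    have ee : e ^+ 2 = `|e| ^+ 2 by rewrite real_normK ?num_real.
    have id : (c * aj^-1 * rj - aj * `|e|) ^+ 2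
        = c * (c * (aj^-2 * rj ^+ 2) + aj ^+ 2 * e ^+ 2 / c - 2 * rj * `|e|).
      rewrite ee; field; rewrite ?gt_eqF //.
    have := sqr_ge0 (c * aj^-1 * rj - aj * `|e|); rewrite id pmulr_rge0 // subr_ge0 //.
  have h1 : rj * `|xpj| <= rj * `|xhj| + rj * `|e|.
    by rewrite -mulrDr ler_pM2l.
  lra.
rewrite !mulr0 mulr1 add0r.
have h2 : rj * `|e| <= rj * `|xpj| + rj * `|xhj| by rewrite -mulrDr ler_pM2l.
lra.
Qed.


Lemma lip_up (W : \bar R) (L y : R) : 0 < L ->
  ((L^-1)%:E * W <= y%:E)%E -> (W <= (L * y)%:E)%E.
Proof.
move=> L0; case: W => [w| |] //.
  by rewrite -EFinM !lee_fin mulrC -ler_pdivlMr ?invr_gt0 // invrK mulrC.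
  by rewrite gt0_muley ?lte_fin ?invr_gt0 // leye_eq.
by move=> _; rewrite leNye.
Qed.

Lemma fin_of_le (x : \bar R) (M : R) : (0 <= x)%E -> (x <= M%:E)%E ->
  exists n : R, x = n%:E.
Proof. by case: x => [n| |] //; exists n. Qed.

Lemma N1_fin (Lam : countType) (a r x : Lam -> R) (t rho : R) :
  (forall j, 0 < a j) -> (forall j, 0 < r j) -> 0 < t < 1 -> 0 <= rho ->
  (ktnorm a r t x <= rho%:E)%E -> (wnorm a 2 x < +oo)%E ->
  exists n : R, wnorm r 1 x = n%:E.
Proof.
move=> a0 r0 t01 rho0 Hk Hx.
have W0 : (0 <= wnorm a 2 x)%E by exact: poweR_ge0.
have [w Hw] : exists w : R, wnorm a 2 x = w%:E.
  by move: W0 Hx; case: (wnorm a 2 x) => [w| |] //; exists w.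
have [w0 Hs] := @wnorm2_bound Lam a x w (fun j => ltW (a0 j)) (ltac:(by rewrite Hw)).
apply: (@fin_of_le _ (Kt t * 1 * (rho / 1) `^ t + w ^+ 2)).
  by rewrite wnorm1E => [|j]; [apply: esum_ge0 => j _; rewrite lee_fin mulr_ge0 ?(ltW (r0 j)) | exact: ltW].
rewrite wnorm1E => [|j]; last exact: ltW.
apply: esum_leR => s us; rewrite lee_fin.
apply: (@le_trans _ _ (\sum_(j <- s) (r j * `|x j| * (if (a j)^-2 * r j * 1 < `|x j| then 0 else 1)
    + a j ^+ 2 * x j ^+ 2))).
  apply: ler_sum => j _; case: ifP => H.
    rewrite mulr0 add0r.
    have H' : r j < a j ^+ 2 * `|x j|.
      by move: H; rewrite mulr1 mulrC ltr_pdivrMr ?exprn_gt0 // mulrC.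
    apply: le_trans (ler_wpM2r (normr_ge0 (x j)) (ltW H')) _.
    by rewrite -mulrA -expr2 real_normK ?num_real.
  by rewrite mulr1 lerDl mulr_ge0 ?sqr_ge0.
rewrite big_split /=; apply: lerD; last exact: Hs.
exact: dyadic.
Qed.


Lemma esum_main (Lam : countType) (a r xp xh : Lam -> R) (t rho beta c M : R) :
  (forall j, 0 < a j) -> (forall j, 0 < r j) -> 0 < t < 1 -> 0 <= rho ->
  (ktnorm a r t xp <= rho%:E)%E ->
  (wnorm a 2 (fun j => (xp j - xh j)%R) <= M%:E)%E -> 0 < beta -> 0 < c ->
  (wnorm r 1 (fun j => (xp j - xh j)%R) + wnorm r 1 xp <=
   wnorm r 1 xh + ((c * (rho / beta) `^ t + M ^+ 2 / c
                   + 2 * (Kt t * beta * (rho / beta) `^ t))%R)%:E)%E.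
Proof.
move=> a0 r0 t01 rho0 Hk HW b0 c0.
have /andP[t0 t1] := t01.
have r0' : forall j, 0 <= r j by move=> j; exact: ltW.
have [M0 HS] := @wnorm2_bound Lam a _ M (fun j => ltW (a0 j)) HW.
rewrite !wnorm1E //.
pose G j := c * ((a j)^-2 * r j ^+ 2 * (if (a j)^-2 * r j * beta < `|xp j| then 1 else 0))
    + a j ^+ 2 * (xp j - xh j) ^+ 2 / c
    + 2 * (r j * `|xp j| * (if (a j)^-2 * r j * beta < `|xp j| then 0 else 1)).
have G0 : forall j, 0 <= G j.
  move=> j; rewrite /G; apply: addr_ge0; first apply: addr_ge0.
  - apply: mulr_ge0; first exact: ltW.
    by apply: mulr_ge0; [apply: mulr_ge0; [rewrite invr_ge0 sqr_ge0 | exact: sqr_ge0] | case: ifP].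
  - by apply: divr_ge0; [apply: mulr_ge0; exact: sqr_ge0 | exact: ltW].
  - by apply: mulr_ge0 => //; apply: mulr_ge0; [apply: mulr_ge0 => // | case: ifP].
rewrite -esumD; [|by move=> j _; rewrite lee_fin mulr_ge0..].
apply: (@le_trans _ _ (\esum_(j in [set: Lam]) ((r j * `|xh j|)%:E + (G j)%:E))%E).
  apply: le_esum => j _; rewrite -EFinD -EFinD lee_fin; exact: point.
rewrite esumD; [|by move=> j _; rewrite lee_fin mulr_ge0..|by move=> j _; rewrite lee_fin].
rewrite leeD2l //; apply: esum_leR => s us; rewrite lee_fin.
rewrite /G !big_split /= -!mulr_sumr -mulr_suml.
apply: lerD; first apply: lerD.
- by apply: ler_wpM2l; [exact: ltW | exact: kt_bound].
- by apply: ler_wpM2r; [rewrite invr_ge0; exact: ltW | exact: HS].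
- by apply: ler_wpM2l => //; exact: dyadic.
Qed.


Lemma master (Lam : countType) (Y : completeNormedModType R) (a r : Lam -> R)
  (D : set (Lam -> R)) (F : (Lam -> R) -> Y) (L : R) (xp : Lam -> R) (rho delta : R)
  (g : Y) (t alpha : R) (xh : Lam -> R) :
  setting a r D F L -> 0 < t < 1 -> 0 < rho -> D xp -> (ktnorm a r t xp <= rho%:E)%E ->
  `|g - F xp| <= delta -> 0 < alpha -> is_minimizer F D r g alpha xh ->
  (wnorm a 2 (fun j => (xp j - xh j)%R) <= (L * (delta + `|g - F xh|))%:E)%E /\
  exists n : R, wnorm r 1 (fun j => (xp j - xh j)%R) = n%:E /\
    forall beta c, 0 < beta -> 0 < c ->
      n <= (delta ^+ 2 - `|g - F xh| ^+ 2) / (2 * alpha) +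
        (c * (rho / beta) `^ t + (L * (delta + `|g - F xh|)) ^+ 2 / c
         + 2 * (Kt t * beta * (rho / beta) `^ t)).
Proof.
case=> [[a0 r0] _ [Dl2 _] _ [L0 Lip]] t01 rho0 Dxp Hk Hg al0 [Dxh Hmin].
set s := `|g - F xh|.
have HW : (wnorm a 2 (fun j => (xp j - xh j)%R) <= (L * (delta + s))%:E)%E.
  apply: le_trans (lip_up _ _ _ L0 (Lip xp xh Dxp Dxh).1) _.
  rewrite lee_fin ler_wpM2l ?(ltW L0) //.
  apply: le_trans (ler_distD g (F xp) (F xh)) _.
  by rewrite distrC; apply: lerD.
split => //.
have [nxp Hnxp] := @N1_fin Lam a r xp t rho a0 r0 t01 (ltW rho0) Hk (Dl2 xp Dxp).
have T := Hmin xp Dxp; rewrite /tikhonov Hnxp in T.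
have N0 : forall x, (0 <= wnorm r 1 x)%E by move=> x; exact: poweR_ge0.
have [h Hh] : exists h : R, wnorm r 1 xh = h%:E.
  move: (N0 xh) T; case: (wnorm r 1 xh) => [h| |] //; first by exists h.
  by rewrite gt0_muley ?lte_fin // addey // -EFinM -EFinD leye_eq.
rewrite Hh -!EFinM -!EFinD lee_fin in T.
have d0 : 0 <= delta := le_trans (normr_ge0 _) Hg.
have Hd2 : `|g - F xp| ^+ 2 <= delta ^+ 2 by rewrite ler_pXn2r ?nnegrE.
have key : forall beta c, 0 < beta -> 0 < c ->
   (wnorm r 1 (fun j => (xp j - xh j)%R) + nxp%:E <= (h + (c * (rho / beta) `^ t
      + (L * (delta + s)) ^+ 2 / c + 2 * (Kt t * beta * (rho / beta) `^ t)))%:E)%E.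
  move=> beta c b0 c0; rewrite -Hnxp EFinD -Hh.
  exact: (@esum_main Lam a r xp xh t rho beta c (L * (delta + s)) a0 r0 t01 (ltW rho0) Hk HW b0 c0).
have [n Hn] : exists n : R, wnorm r 1 (fun j => (xp j - xh j)%R) = n%:E.
  have := key 1 1 ltr01 ltr01.
  move: (N0 (fun j => (xp j - xh j)%R)).
  case: (wnorm r 1 (fun j => (xp j - xh j)%R)) => [n| |] //; first by exists n.
exists n; split => // beta c b0 c0.
have := key beta c b0 c0; rewrite Hn -EFinD lee_fin => K.
have : h - nxp <= (delta ^+ 2 - s ^+ 2) / (2 * alpha).
  rewrite ler_pdivlMr ?mulr_gt0 //; rewrite -/s in T; nra.
lra.
Qed.


Lemma powR_addE (x u v : R) : 0 < x -> x `^ u * x `^ v = x `^ (u + v).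
Proof. by move=> x0; rewrite powRD //; apply/implyP => _; rewrite gt_eqF. Qed.

Lemma q1E (al rho t : R) : 0 < al -> 0 <= rho ->
  al * (rho / al) `^ t = rho `^ t * al `^ (1 - t).
Proof.
move=> a0 r0; rewrite powRM ?invr_ge0 ?(ltW a0) // -powR_inv1 ?(ltW a0) // -powRrM.
rewrite mulrCA; congr (_ * _); rewrite -{1}(powRr1 (ltW a0)) powR_addE //.
by congr (_ `^ _); ring.
Qed.

Lemma q2E (al rho t : R) : 0 < al -> 0 <= rho ->
  al * (al * (rho / al) `^ t) = rho `^ t * al `^ (2 - t).
Proof.
move=> a0 r0; rewrite q1E // mulrCA; congr (_ * _).
by rewrite -{1}(powRr1 (ltW a0)) powR_addE //; congr (_ `^ _); ring.
Qed.

Lemma halfE (rho al t : R) : 0 <= rho -> 0 <= al ->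
  (rho `^ (t / 2) * al `^ ((2 - t) / 2)) ^+ 2 = rho `^ t * al `^ (2 - t).
Proof.
move=> r0 a0; rewrite exprMn -!powR_mulrn ?powR_ge0 // -!powRrM.
by rewrite !mulfVK // pnatr_eq0.
Qed.

Lemma lam2E (rho delta t : R) : 0 < rho -> 0 < delta -> 0 < t < 1 ->
  rho `^ t * (rho `^ (t / (t - 2)) * delta `^ (2 / (2 - t))) `^ (2 - t) = delta ^+ 2.
Proof.
move=> r0 d0 /andP[t0 t1].
have t2 : 2 - t != 0 by rewrite subr_eq0 gt_eqF // (lt_trans t1) // ltr1n.
have t2' : t - 2 != 0 by rewrite subr_eq0 lt_eqF // (lt_trans t1) // ltr1n.
rewrite powRM ?powR_ge0 // -!powRrM mulrA powR_addE //.
have -> : t + t / (t - 2) * (2 - t) = 0 by field.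
by rewrite powRr0 mul1r divfK // -[2]/(2%:R) powR_mulrn ?(ltW d0).
Qed.

Lemma lam1E (rho delta t : R) : 0 < rho -> 0 < delta -> 0 < t < 1 ->
  rho `^ t * (rho `^ (t / (t - 2)) * delta `^ (2 / (2 - t))) `^ (1 - t) =
  rho `^ (t / (2 - t)) * delta `^ ((2 - 2 * t) / (2 - t)).
Proof.
move=> r0 d0 /andP[t0 t1].
have t2 : 2 - t != 0 by rewrite subr_eq0 gt_eqF // (lt_trans t1) // ltr1n.
have t2' : t - 2 != 0 by rewrite subr_eq0 lt_eqF // (lt_trans t1) // ltr1n.
rewrite powRM ?powR_ge0 // -!powRrM mulrA powR_addE //.
congr (_ `^ _ * _ `^ _); field; by rewrite ?t2 ?t2'.
Qed.


Lemma core1 (n s delta L K q al : R) : 0 < L -> 0 < al -> 0 <= delta -> 0 <= s ->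
  0 <= K -> 0 <= q -> 0 <= n ->
  (forall c, 0 < c -> n <= (delta ^+ 2 - s ^+ 2) / (2 * al) +
        (c * q + (L * (delta + s)) ^+ 2 / c + 2 * (K * al * q))) ->
  n <= delta ^+ 2 / al + (4 * L ^+ 2 + 2 * K) * (al * q) /\
  s ^+ 2 <= 3 * delta ^+ 2 + 4 * (8 * L ^+ 2 + 2 * K) * (al * (al * q)).
Proof.
move=> L0 a0 d0 s0 K0 q0 n0 H.
have aL0 : 0 < al * L ^+ 2 by rewrite mulr_gt0 ?exprn_gt0.
split.
  have := H (4 * (al * L ^+ 2)) (mulr_gt0 (ltr0Sn _ _) aL0) => /le_trans; apply.
  have E : (delta ^+ 2 - s ^+ 2) / (2 * al) + (4 * (al * L ^+ 2) * q
      + (L * (delta + s)) ^+ 2 / (4 * (al * L ^+ 2)) + 2 * (K * al * q))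
      = delta ^+ 2 / al + (4 * L ^+ 2 + 2 * K) * (al * q) - (delta - s) ^+ 2 / (4 * al).
    by field; rewrite ?gt_eqF.
  rewrite E lerBlDr lerDl; apply: divr_ge0; [exact: sqr_ge0 | rewrite mulr_ge0 ?(ltW a0)//].
have := H (8 * (al * L ^+ 2)) (mulr_gt0 (ltr0Sn _ _) aL0).
move=> /(le_trans n0).
set RHS := (X in 0 <= X -> _).
have E : 8 * al * RHS = 4 * delta ^+ 2 - 4 * s ^+ 2 + (delta + s) ^+ 2
    + 8 * (8 * L ^+ 2 + 2 * K) * (al * (al * q)).
  by rewrite /RHS; field; rewrite ?gt_eqF.
move=> R0; have : 0 <= 8 * al * RHS by rewrite mulr_ge0 ?mulr_ge0 ?(ltW a0).
rewrite E => H2; have := sqr_ge0 (delta - s); nra.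
Qed.


Lemma sq_le (s d P A : R) : 0 <= s -> 0 <= d -> 0 <= P -> 0 <= A ->
  s ^+ 2 <= 3 * d ^+ 2 + A * P ^+ 2 -> s <= 2 * d + (A + 1) * P.
Proof.
move=> s0 d0 P0 A0 H; rewrite leNgt; apply/negP => H2.
have H3 : (2 * d + (A + 1) * P) ^+ 2 < s ^+ 2.
  by rewrite ltr_pXn2r // ?nnegrE // addr_ge0 ?mulr_ge0 // addr_ge0.
have : 3 * d ^+ 2 + A * P ^+ 2 <= (2 * d + (A + 1) * P) ^+ 2.
  have h1 : 0 <= d * P by rewrite mulr_ge0.
  have h2 : 0 <= A * (P * P) by rewrite !mulr_ge0.
  have h3 : 0 <= A * A * (P * P) by rewrite !mulr_ge0.
  rewrite !expr2; nra.
lra.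
Qed.

Lemma sq_le2 (s d B : R) : 0 <= s -> 0 <= d -> 1 <= B ->
  s ^+ 2 <= B * d ^+ 2 -> s <= B * d.
Proof.
move=> s0 d0 B1 H; rewrite leNgt; apply/negP => H2.
have H3 : (B * d) ^+ 2 < s ^+ 2.
  by rewrite ltr_pXn2r // ?nnegrE // mulr_ge0 // (le_trans ler01 B1).
have : B * d ^+ 2 <= (B * d) ^+ 2.
  rewrite exprMn ler_wpM2r ?sqr_ge0 // expr2 ler_peMl //; exact: le_trans ler01 B1.
lra.
Qed.

Lemma cpow_le (c t : R) : 0 < c -> 0 < t < 1 -> c `^ (1 - t) <= 1 + c.
Proof.
move=> c0 /andP[t0 t1].
have [c1|c1] := leP c 1.
  apply: (@le_trans _ _ (1 `^ (1 - t))).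
    by apply: ge0_ler_powR; rewrite ?nnegrE ?subr_ge0 ?(ltW t1) ?(ltW c0).
  by rewrite powR1 lerDl ltW.
apply: (@le_trans _ _ c); last by rewrite lerDr.
by apply: ler1_powR; [exact: ltW | rewrite lerBlDr lerDl ltW].
Qed.

Lemma zero_case (Lam : countType) (a r e : Lam -> R) :
  (forall j, 0 < a j) -> (forall j, 0 <= r j) -> (wnorm a 2 e <= 0%:E)%E ->
  (wnorm r 1 e <= 0%:E)%E.
Proof.
move=> a0 r0 H; have [_ Hs] := @wnorm2_bound Lam a e 0 (fun j => ltW (a0 j)) H.
have e0 : forall j, e j = 0.
  move=> j; have := Hs [:: j] isT; rewrite big_cons big_nil addr0 expr0n /= => Hj.
  have : a j ^+ 2 * e j ^+ 2 = 0 by apply/eqP; rewrite eq_le Hj mulr_ge0 ?sqr_ge0.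
  by move/eqP; rewrite mulf_eq0 !expf_eq0 /= gt_eqF // => /eqP.
rewrite wnorm1E //; apply: esum_leR => s _; rewrite lee_fin.
by rewrite big1 // => j _; rewrite e0 normr0 mulr0.
Qed.

End Helpers.
Lemma part1 (R : realType) :
  (forall t L : R, 0 < t < 1 -> 0 < L ->
   exists Ce : R, 0 < Ce /\
   forall (Lam : countType) (Y : completeNormedModType R)
     (a r : Lam -> R) (D : set (Lam -> R)) (F : (Lam -> R) -> Y)
     (xp : Lam -> R) (rho delta : R) (g : Y),
     setting a r D F L -> 0 < rho -> D xp -> (ktnorm a r t xp <= rho%:E)%E ->
     0 <= delta -> `|g - F xp| <= delta ->
     forall alpha : R, 0 < alpha -> forall xh, is_minimizer F D r g alpha xh ->
       (wnorm r 1 (fun j => (xp j - xh j)%R)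
          <= (Ce * (delta ^+ 2 / alpha + rho `^ t * alpha `^ (1 - t)))%:E)%E /\
       (wnorm a 2 (fun j => (xp j - xh j)%R)
          <= (Ce * (delta + rho `^ (t / 2) * alpha `^ ((2 - t) / 2)))%:E)%E).
Proof.
move=> t L t01 L0.
set K := Kt t.
have K0 : 0 < K := @Kt_gt0 _ t t01.
set M1 := 4 * L ^+ 2 + 2 * K.
set A := 4 * (8 * L ^+ 2 + 2 * K).
have M10 : 0 <= M1 by rewrite /M1; have := sqr_ge0 L; lra.
have A0 : 0 <= A by rewrite /A; have := sqr_ge0 L; lra.
exists (1 + M1 + 3 * L + L * (A + 1)); split.
  by have h : 0 <= L * (A + 1) := mulr_ge0 (ltW L0) (addr_ge0 A0 ler01); lra.
move=> Lam Y a r D F xp rho delta g Hs rho0 Dxp Hk d0 Hg alpha al0 xh Hmin.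
have [HW [n [Hn Hb]]] := master _ _ _ _ _ _ _ _ _ _ _ _ _ _ Hs t01 rho0 Dxp Hk Hg al0 Hmin.
set s := `|g - F xh| in HW Hb.
have n0 : 0 <= n by rewrite -lee_fin -Hn; exact: poweR_ge0.
have q0 : 0 <= (rho / alpha) `^ t by exact: powR_ge0.
have [C1 C2] := core1 _ _ _ _ _ _ _ L0 al0 d0 (normr_ge0 _) (ltW K0) q0 n0 (fun c c0 => Hb alpha c al0 c0).
rewrite q1E ?(ltW rho0) // in C1.
rewrite q2E ?(ltW rho0) // in C2.
set P := rho `^ (t / 2) * alpha `^ ((2 - t) / 2).
have P0 : 0 <= P by rewrite mulr_ge0 ?powR_ge0.
rewrite -halfE ?(ltW rho0) ?(ltW al0) // -/P in C2.
have s0 : 0 <= s := normr_ge0 _.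
have Hs2 := sq_le _ _ _ _ s0 d0 P0 A0 C2.
set Z := rho `^ t * alpha `^ (1 - t) in C1 *.
have Z0 : 0 <= Z by rewrite mulr_ge0 ?powR_ge0.
have D0 : 0 <= delta ^+ 2 / alpha by rewrite divr_ge0 ?sqr_ge0 ?(ltW al0).
split.
  rewrite Hn lee_fin; apply: le_trans C1 _.
  have h1 : 0 <= 3 * L + L * (A + 1) by rewrite addr_ge0 ?mulr_ge0 ?(ltW L0) ?addr_ge0.
  have h2 : 0 <= (3 * L + L * (A + 1)) * (delta ^+ 2 / alpha + Z) := mulr_ge0 h1 (addr_ge0 D0 Z0).
  have h3 : 0 <= M1 * (delta ^+ 2 / alpha) := mulr_ge0 M10 D0.
  have h4 : 0 <= Z by [].
  rewrite -/M1; lra.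
apply: le_trans HW _; rewrite lee_fin.
have h1 : L * (delta + s) <= L * (3 * delta + (A + 1) * P).
  by rewrite ler_wpM2l ?(ltW L0) //; lra.
apply: le_trans h1 _.
have h2 : 0 <= (1 + M1) * (delta + P) := mulr_ge0 (addr_ge0 ler01 M10) (addr_ge0 d0 P0).
have h3 : 0 <= L * delta := mulr_ge0 (ltW L0) d0.
have h4 : 0 <= L * (A + 1) * P := mulr_ge0 (mulr_ge0 (ltW L0) (addr_ge0 A0 ler01)) P0.
have h5 : 0 <= L * (A + 1) * delta := mulr_ge0 (mulr_ge0 (ltW L0) (addr_ge0 A0 ler01)) d0.
have h6 : 0 <= L * P := mulr_ge0 (ltW L0) P0.
nra.
Qed.
Lemma part2 (R : realType) :
  (forall c1 c2 t L : R, 0 < c1 -> c1 < c2 -> 0 < t < 1 -> 0 < L ->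
   exists Cp : R, 0 < Cp /\
   forall (Lam : countType) (Y : completeNormedModType R)
     (a r : Lam -> R) (D : set (Lam -> R)) (F : (Lam -> R) -> Y)
     (xp : Lam -> R) (rho delta : R) (g : Y),
     setting a r D F L -> 0 < rho -> D xp -> (ktnorm a r t xp <= rho%:E)%E ->
     0 < delta -> `|g - F xp| <= delta ->
     forall alpha : R,
       c1 * rho `^ (t / (t - 2)) * delta `^ (2 / (2 - t)) <= alpha ->
       alpha <= c2 * rho `^ (t / (t - 2)) * delta `^ (2 / (2 - t)) ->
     forall xh, is_minimizer F D r g alpha xh ->
       (wnorm r 1 (fun j => (xp j - xh j)%R)
          <= (Cp * (rho `^ (t / (2 - t)) * delta `^ ((2 - 2 * t) / (2 - t))))%:E)%E /\
       (wnorm a 2 (fun j => (xp j - xh j)%R) <= (Cp * delta)%:E)%E).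
Proof.
move=> c1 c2 t L c10 c12 t01 L0.
have /andP[t0 t1] := t01.
have c20 : 0 < c2 := lt_trans c10 c12.
set K := Kt t.
have K0 : 0 < K := @Kt_gt0 _ t t01.
set M1 := 4 * L ^+ 2 + 2 * K.
set A := 4 * (8 * L ^+ 2 + 2 * K).
have M10 : 0 <= M1 by rewrite /M1; have := sqr_ge0 L; lra.
have A0 : 0 <= A by rewrite /A; have := sqr_ge0 L; lra.
set B := 3 + A * (1 + c2) ^+ 2.
have B1 : 1 <= B by rewrite /B; have := mulr_ge0 A0 (sqr_ge0 (1 + c2)); lra.
exists (c1^-1 + M1 * (1 + c2) + L * (1 + B)); split.
  have h1 : 0 < c1^-1 by rewrite invr_gt0.
  have h2 : 0 <= M1 * (1 + c2) := mulr_ge0 M10 (addr_ge0 ler01 (ltW c20)).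
  have h3 : 0 <= L * (1 + B) := mulr_ge0 (ltW L0) (addr_ge0 ler01 (le_trans ler01 B1)).
  lra.
move=> Lam Y a r D F xp rho delta g Hs rho0 Dxp Hk d0 Hg alpha Hal1 Hal2 xh Hmin.
set lam := rho `^ (t / (t - 2)) * delta `^ (2 / (2 - t)) in Hal1 Hal2.
have lam0 : 0 < lam by rewrite mulr_gt0 ?powR_gt0.
have al0 : 0 < alpha by apply: lt_le_trans Hal1; rewrite -mulrA mulr_gt0.
rewrite -mulrA -/lam in Hal1.
rewrite -mulrA -/lam in Hal2.
have [HW [n [Hn Hb]]] := master _ _ _ _ _ _ _ _ _ _ _ _ _ _ Hs t01 rho0 Dxp Hk Hg al0 Hmin.
set s := `|g - F xh| in HW Hb.
have n0 : 0 <= n by rewrite -lee_fin -Hn; exact: poweR_ge0.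
have q0 : 0 <= (rho / alpha) `^ t by exact: powR_ge0.
have [C1 C2] := core1 _ _ _ _ _ _ _ L0 al0 (ltW d0) (normr_ge0 _) (ltW K0) q0 n0 (fun c c0 => Hb alpha c al0 c0).
rewrite q1E ?(ltW rho0) // in C1.
rewrite q2E ?(ltW rho0) // in C2.
set T := rho `^ (t / (2 - t)) * delta `^ ((2 - 2 * t) / (2 - t)).
have HT : rho `^ t * lam `^ (1 - t) = T by rewrite /lam lam1E.
have HD : rho `^ t * lam `^ (2 - t) = delta ^+ 2 by rewrite /lam lam2E.
have HD' : delta ^+ 2 = lam * T.
  rewrite -HD -HT mulrCA -{2}(powRr1 (ltW lam0)) powR_addE //; congr (_ * _ `^ _); ring.
have T0 : 0 <= T by rewrite mulr_ge0 ?powR_ge0.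
have Z1 : rho `^ t * alpha `^ (1 - t) <= (1 + c2) * T.
  apply: (@le_trans _ _ (rho `^ t * (c2 * lam) `^ (1 - t))).
    rewrite ler_wpM2l ?powR_ge0 //; apply: ge0_ler_powR; rewrite ?nnegrE ?subr_ge0 ?(ltW t1) //.
      exact: ltW.
    by rewrite mulr_ge0 ?(ltW c20) ?(ltW lam0).
  rewrite powRM ?(ltW c20) ?(ltW lam0) // mulrCA HT; apply: ler_wpM2r => //; exact: cpow_le.
have Z2 : rho `^ t * alpha `^ (2 - t) <= (1 + c2) ^+ 2 * delta ^+ 2.
  apply: (@le_trans _ _ (rho `^ t * (c2 * lam) `^ (2 - t))).
    rewrite ler_wpM2l ?powR_ge0 //; apply: ge0_ler_powR; rewrite ?nnegrE ?subr_ge0 //.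
    - by apply: ltW; apply: (lt_trans t1); rewrite ltr1n.
    - exact: ltW.
    - by rewrite mulr_ge0 ?(ltW c20) ?(ltW lam0).
  rewrite powRM ?(ltW c20) ?(ltW lam0) // mulrCA HD ler_wpM2r ?sqr_ge0 //.
  have -> : 2 - t = 1 + (1 - t) by ring.
  rewrite -powR_addE // powRr1 ?(ltW c20) // expr2 ler_pM ?(ltW c20) ?powR_ge0 //.
    by rewrite lerDr ler01.
  exact: cpow_le.
have Dal : delta ^+ 2 / alpha <= c1^-1 * T.
  have hl : lam / alpha <= c1^-1.
    by rewrite ler_pdivrMr // -(ler_pM2l c10) mulVKf ?gt_eqF.
  rewrite HD'; have -> : lam * T / alpha = (lam / alpha) * T by ring.
  by apply: ler_wpM2r.
split.
  rewrite Hn lee_fin; apply: le_trans C1 _.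
  have h1 : M1 * (rho `^ t * alpha `^ (1 - t)) <= M1 * ((1 + c2) * T) by rewrite ler_wpM2l.
  have h2 : 0 <= L * (1 + B) * T := mulr_ge0 (mulr_ge0 (ltW L0) (addr_ge0 ler01 (le_trans ler01 B1))) T0.
  rewrite -/M1; lra.
have s0 : 0 <= s := normr_ge0 _.
have Hs2 : s <= B * delta.
  apply: sq_le2 => //; first exact: ltW.
  apply: le_trans C2 _; rewrite /B.
  have h1 : A * (rho `^ t * alpha `^ (2 - t)) <= A * ((1 + c2) ^+ 2 * delta ^+ 2) by rewrite ler_wpM2l.
  rewrite -/A; lra.
apply: le_trans HW _; rewrite lee_fin.
have h1 : L * (delta + s) <= L * ((1 + B) * delta).
  by rewrite ler_wpM2l ?(ltW L0) //; lra.
apply: le_trans h1 _.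
have h2 : 0 <= (c1^-1 + M1 * (1 + c2)) * delta.
  apply: mulr_ge0 (ltW d0); apply: addr_ge0; first by rewrite invr_ge0 ltW.
  exact: mulr_ge0 M10 (addr_ge0 ler01 (ltW c20)).
lra.
Qed.
Lemma part3 (R : realType) :
  (forall tau2 t L : R, 1 <= tau2 -> 0 < t < 1 -> 0 < L ->
   exists Cd : R, 0 < Cd /\
   forall (Lam : countType) (Y : completeNormedModType R)
     (a r : Lam -> R) (D : set (Lam -> R)) (F : (Lam -> R) -> Y)
     (xp : Lam -> R) (rho delta : R) (g : Y),
     setting a r D F L -> 0 < rho -> D xp -> (ktnorm a r t xp <= rho%:E)%E ->
     0 <= delta -> `|g - F xp| <= delta ->
     forall tau1 : R, 1 <= tau1 -> tau1 <= tau2 ->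
     forall alpha : R, 0 < alpha -> forall xh, is_minimizer F D r g alpha xh ->
       tau1 * delta <= `|F xh - g| -> `|F xh - g| <= tau2 * delta ->
       (wnorm r 1 (fun j => (xp j - xh j)%R)
          <= (Cd * (rho `^ (t / (2 - t)) * delta `^ ((2 - 2 * t) / (2 - t))))%:E)%E /\
       (wnorm a 2 (fun j => (xp j - xh j)%R) <= (Cd * delta)%:E)%E).
Proof.
move=> tau2 t L tau21 t01 L0.
have /andP[t0 t1] := t01.
set K := Kt t.
have K0 : 0 < K := @Kt_gt0 _ t t01.
set C0 := 1 + L ^+ 2 * (1 + tau2) ^+ 2 + 2 * K.
set Cd := C0 + L * (1 + tau2).
have C00 : 0 < C0 by rewrite /C0; have := sqr_ge0 (L * (1 + tau2)); rewrite exprMn; lra.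
have Cd0 : 0 < Cd.
  by rewrite /Cd; have := mulr_ge0 (ltW L0) (addr_ge0 ler01 (le_trans ler01 tau21)); lra.
exists Cd; split => //.
move=> Lam Y a r D F xp rho delta g Hs rho0 Dxp Hk d0 Hg tau1 tau11 tau12 alpha al0 xh Hmin Hd1 Hd2.
have [HW [n [Hn Hb]]] := master _ _ _ _ _ _ _ _ _ _ _ _ _ _ Hs t01 rho0 Dxp Hk Hg al0 Hmin.
set s := `|g - F xh| in HW Hb.
have sE : `|F xh - g| = s by rewrite distrC.
rewrite sE in Hd1 Hd2.
have s0 : 0 <= s := normr_ge0 _.
have Hds : delta <= s by apply: le_trans Hd1; rewrite ler_peMl.
have Hsd : delta + s <= (1 + tau2) * delta by lra.
have [a0 r0] : (forall j, 0 < a j) /\ (forall j, 0 < r j) by case: Hs => [[]].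
have [d00|dpos] := eqVneq delta 0.
  rewrite d00 in Hd2 HW; rewrite d00.
  have s00 : s = 0 by move: Hd2; rewrite mulr0 => Hd2; apply/eqP; rewrite eq_le Hd2 s0.
  rewrite s00 addr0 mulr0 in HW.
  rewrite powR0; last first.
    have t2 : 0 < 2 - t by rewrite subr_gt0 (lt_trans t1) // ltr1n.
    by rewrite gt_eqF // divr_gt0 // subr_gt0; lra.
  rewrite !mulr0; split => //.
  by apply: zero_case => // j; exact: ltW.
have d0' : 0 < delta by rewrite lt_neqAle eq_sym dpos.
set lam := rho `^ (t / (t - 2)) * delta `^ (2 / (2 - t)).
have lam0 : 0 < lam by rewrite mulr_gt0 ?powR_gt0.
set T := rho `^ (t / (2 - t)) * delta `^ ((2 - 2 * t) / (2 - t)).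
have HT : lam * (rho / lam) `^ t = T by rewrite q1E ?(ltW rho0) // /lam lam1E.
have HD : delta ^+ 2 = lam * T.
  by rewrite -HT q2E ?(ltW rho0) // /lam lam2E.
have T0 : 0 <= T by rewrite mulr_ge0 ?powR_ge0.
split.
  rewrite Hn lee_fin; apply: le_trans (Hb lam lam lam0 lam0) _.
  rewrite HT.
  have h1 : (delta ^+ 2 - s ^+ 2) / (2 * alpha) <= 0.
    rewrite pmulr_lle0 ?invr_gt0 ?mulr_gt0 // subr_le0 ler_pXn2r ?nnegrE //; exact: ltW.
  have h2 : (L * (delta + s)) ^+ 2 / lam <= L ^+ 2 * (1 + tau2) ^+ 2 * T.
    rewrite ler_pdivrMr // exprMn.
    apply: (@le_trans _ _ (L ^+ 2 * ((1 + tau2) * delta) ^+ 2)).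
      apply: ler_wpM2l; first exact: sqr_ge0.
      rewrite ler_pXn2r ?nnegrE //; first by rewrite addr_ge0 //; exact: ltW.
      by rewrite mulr_ge0 ?(ltW d0') // addr_ge0 // (le_trans ler01 tau21).
    by rewrite exprMn HD le_eqVlt; apply/orP; left; apply/eqP; ring.
  have h3 : 0 <= L * (1 + tau2) * T.
    by apply: mulr_ge0 T0; apply: mulr_ge0 (ltW L0) (addr_ge0 ler01 (le_trans ler01 tau21)).
  have -> : K * lam * (rho / lam) `^ t = K * T by rewrite -HT mulrA.
  rewrite /Cd /C0 -/K; lra.
apply: le_trans HW _; rewrite lee_fin.
have h1 : L * (delta + s) <= L * ((1 + tau2) * delta) by rewrite ler_wpM2l ?(ltW L0).
apply: le_trans h1 _; rewrite mulrA; apply: ler_wpM2r; first exact: ltW.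
by rewrite /Cd lerDr; exact: ltW.
Qed.
Theorem theorem4p4 (R : realType) :
  (* 1. error splitting *)
  (forall t L : R, 0 < t < 1 -> 0 < L ->
   exists Ce : R, 0 < Ce /\
   forall (Lam : countType) (Y : completeNormedModType R)
     (a r : Lam -> R) (D : set (Lam -> R)) (F : (Lam -> R) -> Y)
     (xp : Lam -> R) (rho delta : R) (g : Y),
     setting a r D F L -> 0 < rho -> D xp -> (ktnorm a r t xp <= rho%:E)%E ->
     0 <= delta -> `|g - F xp| <= delta ->
     forall alpha : R, 0 < alpha -> forall xh, is_minimizer F D r g alpha xh ->
       (wnorm r 1 (fun j => (xp j - xh j)%R)
          <= (Ce * (delta ^+ 2 / alpha + rho `^ t * alpha `^ (1 - t)))%:E)%E /\
       (wnorm a 2 (fun j => (xp j - xh j)%R)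
          <= (Ce * (delta + rho `^ (t / 2) * alpha `^ ((2 - t) / 2)))%:E)%E) /\
  (* 2. a-priori parameter choice *)
  (forall c1 c2 t L : R, 0 < c1 -> c1 < c2 -> 0 < t < 1 -> 0 < L ->
   exists Cp : R, 0 < Cp /\
   forall (Lam : countType) (Y : completeNormedModType R)
     (a r : Lam -> R) (D : set (Lam -> R)) (F : (Lam -> R) -> Y)
     (xp : Lam -> R) (rho delta : R) (g : Y),
     setting a r D F L -> 0 < rho -> D xp -> (ktnorm a r t xp <= rho%:E)%E ->
     0 < delta -> `|g - F xp| <= delta ->
     forall alpha : R,
       c1 * rho `^ (t / (t - 2)) * delta `^ (2 / (2 - t)) <= alpha ->
       alpha <= c2 * rho `^ (t / (t - 2)) * delta `^ (2 / (2 - t)) ->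
     forall xh, is_minimizer F D r g alpha xh ->
       (wnorm r 1 (fun j => (xp j - xh j)%R)
          <= (Cp * (rho `^ (t / (2 - t)) * delta `^ ((2 - 2 * t) / (2 - t))))%:E)%E /\
       (wnorm a 2 (fun j => (xp j - xh j)%R) <= (Cp * delta)%:E)%E) /\
  (* 3. discrepancy principle *)
  (forall tau2 t L : R, 1 <= tau2 -> 0 < t < 1 -> 0 < L ->
   exists Cd : R, 0 < Cd /\
   forall (Lam : countType) (Y : completeNormedModType R)
     (a r : Lam -> R) (D : set (Lam -> R)) (F : (Lam -> R) -> Y)
     (xp : Lam -> R) (rho delta : R) (g : Y),
     setting a r D F L -> 0 < rho -> D xp -> (ktnorm a r t xp <= rho%:E)%E ->
     0 <= delta -> `|g - F xp| <= delta ->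
     forall tau1 : R, 1 <= tau1 -> tau1 <= tau2 ->
     forall alpha : R, 0 < alpha -> forall xh, is_minimizer F D r g alpha xh ->
       tau1 * delta <= `|F xh - g| -> `|F xh - g| <= tau2 * delta ->
       (wnorm r 1 (fun j => (xp j - xh j)%R)
          <= (Cd * (rho `^ (t / (2 - t)) * delta `^ ((2 - 2 * t) / (2 - t))))%:E)%E /\
       (wnorm a 2 (fun j => (xp j - xh j)%R) <= (Cd * delta)%:E)%E).
Proof.
split; [exact: part1 | split; [exact: part2 | exact: part3]].
Qed.
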